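(* Let $x\in\mathbb{R}^n$ have positive entries with $\max_{i,j}x_i/x_j\le b$, and let $y\in\mathbb{R}^n$ be nonnegative and nonzero. Then $$D(x,y)\le\min\left(1+\sqrt n,\,1+\sqrt b\right)\sqrt2\,\sin(x,y).$$
   Context: $\sin(x,y)$ is the sine of the angle between $x$ and $y$, and $$D(x,y)=\frac{\left\|\frac{y}{\|y\|_1}-\frac{x}{\|x\|_1}\right\|_2}{\left\|\frac{y}{\|y\|_1}\right\|_2}.$$ *)

(* Defs.v *)
From mathcomp Require Import all_boot all_order all_algebra.
From mathcomp Require Import reals.
Set Implicit Arguments. Unset Strict Implicit. Unset Printing Implicit Defensive.
Import Order.TTheory GRing.Theory Num.Theory.
Local Open Scope ring_scope.

Section Defs.
Variables (R : realType) (n : nat).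

Definition norm1 (x : 'I_n -> R) : R := \sum_(i < n) `|x i|.
Definition dotp (x y : 'I_n -> R) : R := \sum_(i < n) x i * y i.
Definition norm2 (x : 'I_n -> R) : R := Num.sqrt (dotp x x).

Definition cos_angle (x y : 'I_n -> R) : R := dotp x y / (norm2 x * norm2 y).
Definition sin_angle (x y : 'I_n -> R) : R := Num.sqrt (1 - cos_angle x y ^+ 2).

Definition Ddist (x y : 'I_n -> R) : R :=
  norm2 (fun i => y i / norm1 y - x i / norm1 x) / norm2 (fun i => y i / norm1 y).
End Defs.

(* Main.v *)
Require Import Defs.
From mathcomp Require Import all_boot all_order all_algebra.
From mathcomp Require Import reals.
From mathcomp Require Import ring lra.
Import Order.TTheory GRing.Theory Num.Theory.
Local Open Scope ring_scope.

Section Helpers.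
Variables (R : realType) (n : nat).

Lemma sum4 (f g h : 'I_n -> R) (a b c d : R) :
  \sum_(i < n) (f i * a + g i * b + h i * c + d) =
  (\sum_(i < n) f i) * a + (\sum_(i < n) g i) * b + (\sum_(i < n) h i) * c + d * n%:R.
Proof.
rewrite !big_split /= -!mulr_suml sumr_const card_ord mulr_natr //.
Qed.

Lemma le_sum_term (f : 'I_n -> R) (hf : forall i, 0 <= f i) i : f i <= \sum_(j < n) f j.
Proof.
rewrite (bigD1 i) //= lerDl; apply: sumr_ge0 => j _; exact: hf.
Qed.

Lemma CS (a z : 'I_n -> R) : (dotp a z) ^+ 2 <= dotp a a * dotp z z.
Proof.
have [Z0|Znz] := eqVneq (dotp z z) 0.
  have hz : forall i, z i = 0.
    move=> i; have Hp : forall j : 'I_n, true -> 0 <= z j * z j.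
      by move=> j _; rewrite -expr2 sqr_ge0.
    have := @psumr_eq0P _ _ _ _ Hp Z0 i isT.
    by move/eqP; rewrite mulf_eq0 orbb => /eqP.
  rewrite Z0 mulr0 /dotp big1 ?expr0n // => i _; by rewrite hz mulr0.
have Zge : 0 <= dotp z z by apply: sumr_ge0 => i _; rewrite -expr2 sqr_ge0.
have Zgt : 0 < dotp z z by rewrite lt0r Znz.
set Z := dotp z z; set C := dotp a z; set A := dotp a a.
have H : 0 <= \sum_(i < n) (a i * Z - C * z i) ^+ 2 by apply: sumr_ge0 => i _; rewrite sqr_ge0.
have E : \sum_(i < n) (a i * Z - C * z i) ^+ 2 =
   \sum_(i < n) ((a i * a i) * (Z * Z) + (a i * z i) * (- 2 * Z * C) + (z i * z i) * (C * C) + 0).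
  by apply: eq_bigr => i _; ring.
rewrite E sum4 mul0r addr0 in H.
have H2 : 0 <= Z * (A * Z - C ^+ 2).
  move: H; rewrite -/(dotp a a) -/(dotp a z) -/(dotp z z) -/A -/C -/Z. congr (_ <= _). clearbody A C Z. ring.
by rewrite pmulr_rge0 // subr_ge0 in H2.
Qed.

End Helpers.

Theorem lemmaA4 (R : realType) (n : nat) (x y : 'I_n -> R) (b : R) :
  (forall i, 0 < x i) ->
  (forall i j, x i / x j <= b) ->
  (forall i, 0 <= y i) ->
  (exists i, y i != 0) ->
  Ddist x y <=
    Num.min (1 + Num.sqrt (n%:R)) (1 + Num.sqrt b) * Num.sqrt 2 * sin_angle x y.
Proof.
move=> hx hb hy [i0 hi0].
have hy0 : 0 < y i0 by rewrite lt0r hi0 hy.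
have hn : (0 < n)%N by apply: leq_ltn_trans (ltn_ord i0).
have hnR : 0 < n%:R :> R by rewrite ltr0n.
set Sx := \sum_(i < n) x i; set Sy := \sum_(i < n) y i.
have n1x : norm1 x = Sx by apply: eq_bigr => i _; rewrite ger0_norm // ltW.
have n1y : norm1 y = Sy by apply: eq_bigr => i _; rewrite ger0_norm.
have Sxgt : 0 < Sx.
  apply: lt_le_trans (hx i0) _; apply: le_sum_term => i; exact: ltW.
have Sygt : 0 < Sy by apply: lt_le_trans hy0 _; apply: le_sum_term.
set X := dotp x x; set Y := dotp y y; set P := dotp x y.
have Xgt : 0 < X.
  apply: (@lt_le_trans _ _ (x i0 * x i0)); first by rewrite mulr_gt0.
  by rewrite /X /dotp; apply: (@le_sum_term R n (fun i => x i * x i)) => k; rewrite -expr2 sqr_ge0.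
have Ygt : 0 < Y.
  apply: (@lt_le_trans _ _ (y i0 * y i0)); first by rewrite mulr_gt0.
  by rewrite /Y /dotp; apply: (@le_sum_term R n (fun i => y i * y i)) => k; rewrite -expr2 sqr_ge0.
have b1 : 1 <= b by have := hb i0 i0; rewrite divff // gt_eqF.
have nXb : n%:R * X <= b * (Sx * Sx).
  have -> : n%:R * X = \sum_(j < n) \sum_(i < n) x i * x i.
    by rewrite sumr_const card_ord mulr_natl.
  have -> : b * (Sx * Sx) = \sum_(j < n) \sum_(i < n) x i * (b * x j).
    symmetry; rewrite (eq_bigr (fun j => Sx * (b * x j))); last by move=> j _; rewrite mulr_suml.
    by rewrite -!mulr_sumr -/Sx mulrCA.
  apply: ler_sum => j _; apply: ler_sum => i _.
  apply: ler_wpM2l; first exact: ltW.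
  by rewrite -ler_pdivrMr // hb.
have XS : X <= Sx * Sx.
  rewrite /Sx mulr_suml; apply: ler_sum => i _.
  apply: ler_wpM2l; first exact: ltW.
  by apply: le_sum_term => j; exact: ltW.
have gram : Y * (Sx * Sx) - 2 * P * Sx * Sy + X * (Sy * Sy) <= n%:R * (X * Y - P ^+ 2).
  have := @CS R n (fun i => n%:R * x i - Sx) (fun i => n%:R * y i - Sy).
  have E : forall (u v : 'I_n -> R) Su Sv, Su = \sum_(i < n) u i -> Sv = \sum_(i < n) v i ->
    dotp (fun i => n%:R * u i - Su) (fun i => n%:R * v i - Sv) =
    n%:R ^+ 2 * dotp u v - n%:R * Su * Sv.
    move=> u v Su Sv hu hv; rewrite /dotp.
    have -> : \sum_(i < n) (n%:R * u i - Su) * (n%:R * v i - Sv) =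
      \sum_(i < n) ((u i * v i) * n%:R ^+ 2 + u i * (- n%:R * Sv) + v i * (- n%:R * Su) + Su * Sv).
      by apply: eq_bigr => i _; ring.
    rewrite sum4 -hu -hv; ring.
  rewrite !E // -/X -/Y -/P.
  have dotyx : dotp y x = P by rewrite /P /dotp; apply: eq_bigr => i _; rewrite mulrC.
  move=> H.
  have H' : 0 <= n%:R ^+ 3 * (n%:R * (X * Y - P ^+ 2) - (Y * (Sx * Sx) - 2 * P * Sx * Sy + X * (Sy * Sy))).
    move: H; rewrite -subr_ge0; congr (_ <= _).
    clearbody X Y P Sx Sy; ring.
  by rewrite pmulr_rge0 ?exprn_gt0 // subr_ge0 in H'.
set M := Num.min (1 + Num.sqrt (n%:R)) (1 + Num.sqrt b).
have M0 : 0 <= M.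
  rewrite /M le_min; apply/andP; split; apply: addr_ge0 => //; exact: sqrtr_ge0.
have nXM : n%:R * X <= M ^+ 2 * (Sx * Sx).
  rewrite /M minEle; case: ifP => _.
  - have s2 := sqr_sqrtr (ler0n R n); have s0 := sqrtr_ge0 (n%:R : R).
    have hh : n%:R <= (1 + Num.sqrt (n%:R : R)) ^+ 2 by rewrite -{1}s2; nra.
    apply: (le_trans (ler_wpM2l (ltW hnR) XS)).
    apply: ler_wpM2r => //; rewrite mulr_ge0 // ltW //.
  - have b0 : 0 <= b by apply: le_trans b1.
    have s2 := sqr_sqrtr b0; have s0 := sqrtr_ge0 b.
    have hh : b <= (1 + Num.sqrt b) ^+ 2 by rewrite -{1}s2; nra.
    apply: (le_trans nXb).
    apply: ler_wpM2r => //; rewrite mulr_ge0 // ltW //.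
have CSxy : P ^+ 2 <= X * Y by apply: CS.
set Q := 1 - P ^+ 2 / (X * Y).
have Q0 : 0 <= Q by rewrite /Q subr_ge0 ler_pdivrMr ?mul1r // mulr_gt0.
rewrite /Ddist /sin_angle /cos_angle /norm2 n1x n1y -/X -/Y -/P.
set A := dotp _ _; set B := dotp _ _.
have EA : A = Y * (Sy^-1 * Sy^-1) + P * (-2 * Sx^-1 * Sy^-1) + X * (Sx^-1 * Sx^-1) + 0 * n%:R.
  rewrite /A /dotp -sum4; apply: eq_bigr => i _; ring.
have EB : B = Y * (Sy^-1 * Sy^-1).
  rewrite /B /dotp /Y /dotp mulr_suml; apply: eq_bigr => i _; ring.
have A0 : 0 <= A by rewrite /A /dotp; apply: sumr_ge0 => i _; rewrite -expr2 sqr_ge0.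
have B0 : 0 <= B by rewrite /B /dotp; apply: sumr_ge0 => i _; rewrite -expr2 sqr_ge0.
have c2 : (P / (Num.sqrt X * Num.sqrt Y)) ^+ 2 = P ^+ 2 / (X * Y).
  by rewrite expr_div_n exprMn !sqr_sqrtr // ltW.
rewrite c2 -/Q.
rewrite -ler_sqr ?nnegrE; last 2 first.
- by rewrite divr_ge0 ?sqrtr_ge0.
- by rewrite !mulr_ge0 ?sqrtr_ge0.
rewrite expr_div_n !exprMn !sqr_sqrtr //.
have key : n%:R * X / (Sx * Sx) * Q - A / B =
    (n%:R * (X * Y - P ^+ 2) - (Y * (Sx * Sx) - 2 * P * Sx * Sy + X * (Sy * Sy))) / (Sx * Sx * Y).
  rewrite EA EB /Q; field.
  by rewrite !gt_eqF.
have k0 : A / B <= n%:R * X / (Sx * Sx) * Q.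
  rewrite -subr_ge0 key divr_ge0 ?subr_ge0 // !mulr_ge0 // ltW //.
apply: (le_trans k0).
have h1 : n%:R * X / (Sx * Sx) <= M ^+ 2 by rewrite ler_pdivrMr // mulr_gt0.
have h2 : n%:R * X / (Sx * Sx) * Q <= M ^+ 2 * Q by apply: ler_wpM2r.
apply: (le_trans h2).
have m20 : 0 <= M ^+ 2 * Q by rewrite mulr_ge0 // sqr_ge0.
have -> : M ^+ 2 * 2 * Q = 2 * (M ^+ 2 * Q) by ring.
lra.
Qed.
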